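(* Fix $h\in\{2,\dots,H\}$. If $x_1,x_2\in\mathcal{X}_{h-1}$ are kinematically inseparable, then $f^\star(x_1,a,x')=f^\star(x_2,a,x')$ for all $x'\in\mathcal{X}_h$ and $a\in\mathcal{A}$. Analogously, if $x_1',x_2'\in\mathcal{X}_h$ are kinematically inseparable, then $f^\star(x,a,x_1')=f^\star(x,a,x_2')$ for all $x\in\mathcal{X}_{h-1}$ and $a\in\mathcal{A}$.
   Context: Block MDP: horizon $H$; finite latent states $\mathcal{S}=\sqcup_h\mathcal{S}_h$; countable observations $\mathcal{X}=\sqcup_h\mathcal{X}_h$; finite actions $\mathcal{A}$; start distribution $\mu$; transitions $T(\cdot\mid s,a)\in\Delta(\mathcal{S}_{h+1})$; emissions $q(\cdot\mid s)\in\Delta(\mathcal{X}_h)$ with disjoint supports, decoder $g^\star$; observation transitions $T(x'\mid x,a)=q(x'\mid g^\star(x'))T(g^\star(x')\mid g^\star(x),a)$. $\Psi_{h-1}$ is a finite set of policies forming an $\alpha$-policy cover of $\mathcal{S}_{h-1}$. $\rho_h\in\Delta(\mathcal{X}_h)$ is the law of $x_h$ when a policy chosen uniformly from $\Psi_{h-1}$ is followed to $x_{h-1}$ and then a uniformly random action is taken; $f^\star(x,a,x')=\frac{T(x'\mid x,a)}{T(x'\mid x,a)+\rho_h(x')}$ (equivalently $\frac{T(g^\star(x')\mid g^\star(x),a)}{T(g^\star(x')\mid g^\star(x),a)+\rho_h(g^\star(x'))}$), the Bayes optimal predictor for distinguishing real from imposter transitions. KI: for full-support $u\in\Delta(\mathcal{X}\times\mathcal{A})$,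 $\mathbb{P}_u(x,a\mid x')=\frac{T(x'\mid x,a)u(x,a)}{\sum_{\tilde x,\tilde a}T(x'\mid\tilde x,\tilde a)u(\tilde x,\tilde a)}$; $x_1',x_2'$ are backward KI if $\mathbb{P}_u(\cdot\mid x_1')=\mathbb{P}_u(\cdot\mid x_2')$ for every such $u$; $x_1,x_2$ are forward KI if $T(\cdot\mid x_1,a)=T(\cdot\mid x_2,a)$ for all $a$; kinematically inseparable means both. *)

(* Defs.v *)
From HB Require Import structures.
From mathcomp Require Import all_boot all_order all_algebra.
From mathcomp Require Import boolp classical_sets reals constructive_ereal ereal esum.
Set Implicit Arguments. Unset Strict Implicit. Unset Printing Implicit Defensive.
Import Order.TTheory GRing.Theory Num.Theory.
Local Open Scope ring_scope.
Local Open Scope classical_set_scope.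

Section BlockMDP.
Variables (R : realType) (S : finType) (X : countType) (A : finType).

Definition sumX (f : X -> R) : R := fine (\esum_(x in [set: X]) (f x)%:E).

(* Block MDP with horizon H: layered latent states (levS s \in [1,H]),
   layered observations (levX x \in [1,H]), start distribution mu on S_1,
   transitions T s a in Delta(S_{h+1}) (for levS s = h < H; T s a is
   supported on layer h+1 in general, hence zero at layer H),
   emissions q s in Delta(X_h) with pairwise disjoint supports, and a
   decoder g mapping every emitted observation to its (unique) latent state. *)
Definition is_block_mdp (H : nat) (levS : S -> nat) (levX : X -> nat)
  (mu : S -> R) (T : S -> A -> S -> R) (q : S -> X -> R) (g : X -> S) : Prop :=
  [/\ (forall s, (1 <= levS s <= H)%N) /\ (forall x, (1 <= levX x <= H)%N),
      [/\ (forall s, 0 <= mu s), \sum_(s : S) mu s = 1 &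
          (forall s, 0 < mu s -> levS s = 1%N)],
      [/\ (forall s a s', 0 <= T s a s'),
          (forall s a s', 0 < T s a s' -> levS s' = (levS s).+1) &
          (forall s a, (levS s < H)%N -> \sum_(s' : S) T s a s' = 1)],
      [/\ (forall s x, 0 <= q s x), (forall s, sumX (q s) = 1) &
          (forall s x, 0 < q s x -> levX x = levS s)] &
      [/\ (forall s1 s2 x, 0 < q s1 x -> 0 < q s2 x -> s1 = s2) &
          (forall x s, 0 < q s x -> g x = s)]].

Variables (mu : S -> R) (T : S -> A -> S -> R) (q : S -> X -> R) (g : X -> S).

Definition Tobs (x : X) (a : A) (x' : X) : R := q (g x') x' * T (g x) a (g x').

Definition is_policy (pi : X -> A -> R) : Prop :=
  (forall x a, 0 <= pi x a) /\ (forall x, \sum_(a : A) pi x a = 1).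

(* law of the latent state s_{n+1} when following pi from the start *)
Fixpoint slaw_aux (pi : X -> A -> R) (n : nat) (s' : S) : R :=
  match n with
  | 0 => mu s'
  | n'.+1 => \sum_(s : S) slaw_aux pi n' s *
               sumX (fun x => q s x * \sum_(a : A) pi x a * T s a s')
  end.

(* P_pi(s_t = s), for layers t >= 1 *)
Definition slaw (pi : X -> A -> R) (t : nat) (s : S) : R := slaw_aux pi t.-1 s.

Definition xlaw (pi : X -> A -> R) (t : nat) (x : X) : R :=
  \sum_(s : S) slaw pi t s * q s x.

Definition eta (t : nat) (s : S) : R :=
  sup [set slaw pi t s | pi in is_policy].

Definition policy_cover (t : nat) (levS : S -> nat) (alpha : R)
  (I : finType) (psi : I -> X -> A -> R) : Prop :=
  [/\ (0 < #|I|)%N, injective psi, (forall i, is_policy (psi i)) &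
      forall s, levS s = t ->
        \big[Num.max/0]_(i : I) slaw (psi i) t s >= alpha * eta t s].

(* rho_h: law of x_h when a uniformly chosen policy of Psi_{h-1} is followed
   to x_{h-1}, then a uniformly random action is taken. *)
Definition rho (h : nat) (I : finType) (psi : I -> X -> A -> R) (x' : X) : R :=
  #|I|%:R^-1 * \sum_(i : I)
     sumX (fun x => xlaw (psi i) h.-1 x *
                    \sum_(a : A) #|A|%:R^-1 * Tobs x a x').

Definition fstar (h : nat) (I : finType) (psi : I -> X -> A -> R)
  (x : X) (a : A) (x' : X) : R :=
  Tobs x a x' / (Tobs x a x' + rho h psi x').

Definition full_support_dist (u : X -> A -> R) : Prop :=
  (forall x a, 0 < u x a) /\ sumX (fun x => \sum_(a : A) u x a) = 1.

Definition Pu (u : X -> A -> R) (x : X) (a : A) (x' : X) : R :=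
  Tobs x a x' * u x a / sumX (fun y => \sum_(b : A) Tobs y b x' * u y b).

Definition backward_KI (x1' x2' : X) : Prop :=
  forall u, full_support_dist u -> forall x a, Pu u x a x1' = Pu u x a x2'.

Definition forward_KI (x1 x2 : X) : Prop :=
  forall a x', Tobs x1 a x' = Tobs x2 a x'.

Definition kin_insep (x1 x2 : X) : Prop := backward_KI x1 x2 /\ forward_KI x1 x2.

End BlockMDP.

(* Main.v *)
Require Import Defs.
From HB Require Import structures.
From mathcomp Require Import all_boot all_order all_algebra.
From mathcomp Require Import boolp classical_sets reals constructive_ereal ereal esum.
From mathcomp Require Import fsbigop cardinality topology normedtype sequences.
Import Order.TTheory GRing.Theory Num.Theory.
Local Open Scope ring_scope.
Local Open Scope classical_set_scope.

Lemma geom_esum (R : realType) :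
  (\esum_(k in [set: nat]) ((1 / (2 ^ (k + 1))%:R : R)%:E) = 1%:E)%E.
Proof.
rewrite -nneseries_esumT; last first.
  by move=> n; rewrite lee_fin divr_ge0.
have := @cvg_geometric_eseries_half R 1 0.
rewrite expr0 divr1 => /cvg_lim <- //.
Qed.

Section L.
Variables (R : realType) (X : countType).

Lemma sumX_ge0 (f : X -> R) : (forall x, 0 <= f x) -> 0 <= sumX f.
Proof. by move=> f0; rewrite /sumX; apply: fine_ge0; apply: esum_ge0 => x _; rewrite lee_fin. Qed.

Lemma esum_term (f : X -> R) x : (forall x, 0 <= f x) ->
  ((f x)%:E <= \esum_(y in [set: X]) (f y)%:E)%E.
Proof.
move=> f0; apply: esum_ge; exists [set x]; last by rewrite fsbig_set1.
by split; [exact: finite_set1 | by move=> ?].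
Qed.

Lemma fin_of_sumX1 (g : X -> R) : sumX g = 1 -> (\esum_(y in [set: X]) (g y)%:E < +oo)%E.
Proof.
rewrite /sumX; case: (\esum_(y in _) _) => [r| |] //=; try by rewrite ltry.
all: by move/esym/eqP; rewrite oner_eq0.
Qed.

Lemma sumX_term (f g : X -> R) x : (forall x, 0 <= f x) -> (forall x, f x <= g x) ->
  (\esum_(y in [set: X]) (g y)%:E < +oo)%E -> f x <= sumX f.
Proof.
move=> f0 fg gfin.
have e0 : (0 <= \esum_(y in [set: X]) (f y)%:E)%E by apply: esum_ge0 => y _; rewrite lee_fin.
have ef : (\esum_(y in [set: X]) (f y)%:E < +oo)%E.
  apply: le_lt_trans gfin; apply: le_esum => y _; rewrite lee_fin.
  exact: fg.
have := @esum_term f x f0; rewrite /sumX.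
move: e0 ef; case: (\esum_(y in _) _) => [r| |] //= _ _.
Qed.

Lemma sumXZ (c : R) (f : X -> R) : 0 <= c -> (forall x, 0 <= f x) ->
  sumX (fun x => c * f x) = c * sumX f.
Proof.
move=> c0 f0; rewrite /sumX.
move: c0; rewrite le_eqVlt => /orP[/eqP <-|cpos].
  rewrite mul0r esum1 // => x _; by rewrite mul0r.
have -> : (\esum_(x in [set: X]) ((c * f x)%:E) =
          c%:E * \esum_(x in [set: X]) (f x)%:E)%E.
  rewrite /esum -ereal_sup_pZl //; congr ereal_sup.
  apply/seteqP; split => y.
    move=> [F FF <-]; exists (\sum_(i \in F) (f i)%:E)%E; first by exists F.
    rewrite ge0_mule_fsumr; last by move=> i; rewrite lee_fin.
    by apply: eq_fsbigr => i _; rewrite EFinM.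
  move=> [z [F FF <-] <-]; exists F => //.
  rewrite ge0_mule_fsumr; last by move=> i; rewrite lee_fin.
  by apply: eq_fsbigr => i _; rewrite EFinM.
case: (\esum_(x in _) _) => [r| |] //=.
- by rewrite real_mulry ?gtr0_real // gtr0_sg // mul1e /= mulr0.
- by rewrite real_mulrNy ?gtr0_real // gtr0_sg // mul1e /= mulr0.
Qed.

Lemma full_support_exists (A : finType) (x0 : X) (a0 : A) :
  exists u : X -> A -> R, full_support_dist u.
Proof.
pose v (k : nat) : R := 1 / (2 ^ (k + 1))%:R.
have v0 k : 0 < v k by rewrite /v divr_gt0 // ltr0n expn_gt0.
pose w (x : X) := v (pickle x).
have wfin : (\esum_(y in [set: X]) (w y)%:E < +oo)%E.
  have -> : (\esum_(y in [set: X]) (w y)%:E =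
            \esum_(j in pickle @` [set: X]) (v j)%:E)%E.
    by rewrite (esum_image setT pickle (fun j => (v j)%:E)) //; move=> ? ? _ _; exact: (pcan_inj (@pickleK X)).
  apply: (@le_lt_trans _ _ (\esum_(j in [set: nat]) (v j)%:E)%E).
    rewrite ge_ereal_sup => //= _ [F [finF FP] <-]; apply: esum_ge.
    by exists F.
  by rewrite /v geom_esum ltry.
pose Z := sumX w.
have Zpos : 0 < Z.
  apply: (lt_le_trans (v0 (pickle x0))).
  apply: (@sumX_term w w x0 _ _ wfin).
  - by move=> x; exact: (ltW (v0 _)).
  - by move=> x.
have Apos : (0 < #|A|)%N by apply/card_gt0P; exists a0.
exists (fun x a => w x / (Z * #|A|%:R)); split.
  by move=> x a; rewrite divr_gt0 // mulr_gt0 // ltr0n.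
have -> : (fun x => \sum_(a : A) w x / (Z * #|A|%:R)) = (fun x => Z^-1 * w x).
  have nA : (#|A|%:R : R) != 0 by rewrite pnatr_eq0 -lt0n.
  apply: funext => x; rewrite sumr_const -[#|xpredT|]/#|A| -[_ *+ #|A|]mulr_natr invfM mulrA divfK // mulrC; reflexivity.
rewrite -[RHS](mulVf (lt0r_neq0 Zpos)); apply: sumXZ.
  by rewrite invr_ge0 ltW.
by move=> x; exact: (ltW (v0 _)).
Qed.

End L.

Lemma sum_term (R : realType) (A : finType) (F : A -> R) b :
  (forall b, 0 <= F b) -> F b <= \sum_(c : A) F c.
Proof.
move=> F0; rewrite (bigD1 b) //= lerDl; apply: sumr_ge0 => i _; exact: F0.
Qed.

Section Main.
Variables (R : realType) (S : finType) (X : countType) (A : finType)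
  (H : nat) (levS : S -> nat) (levX : X -> nat)
  (mu : S -> R) (T : S -> A -> S -> R) (q : S -> X -> R) (g : X -> S).
Hypothesis hM : is_block_mdp H levS levX mu T q g.

Lemma q_ge0 s x : 0 <= q s x.
Proof. by case: hM => _ _ _ [q0 _ _] _. Qed.

Lemma T_ge0 s a s' : 0 <= T s a s'.
Proof. by case: hM => _ _ [T0 _ _] _ _. Qed.

Lemma q_le1 s x : q s x <= 1.
Proof.
case: hM => _ _ _ [q0 qs _] _.
rewrite -(qs s); apply: (@sumX_term R X (q s) (q s) x) => //.
exact: fin_of_sumX1.
Qed.

Lemma T_le1 s a s' : T s a s' <= 1.
Proof.
case: hM => [[hlS _] _ [T0 Tlev Tsum] _ _].
case: (ltnP (levS s) H) => hs.
  rewrite -(Tsum s a hs); exact: (@sum_term R S (T s a) s' (T0 s a)).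
have := T0 s a s'; rewrite le_eqVlt => /orP[/eqP <- //|/Tlev hl].
have := hlS s'; rewrite hl => /andP[_]; rewrite ltnNge hs.
by [].
Qed.

Lemma Tobs_ge0 x a x' : 0 <= Tobs T q g x a x'.
Proof. by rewrite /Tobs mulr_ge0 ?q_ge0 ?T_ge0. Qed.

Lemma Tobs_le1 x a x' : Tobs T q g x a x' <= 1.
Proof.
rewrite /Tobs -(mulr1 1); apply: ler_pM; rewrite ?q_ge0 ?T_ge0 ?q_le1 ?T_le1 //.
Qed.

Lemma slaw_aux_ge0 pi : is_policy pi -> forall n s, 0 <= slaw_aux mu T q pi n s.
Proof.
case: hM => _ [mu0 _ _] _ _ _ [pi0 _].
elim=> [|n IH] s /=; first exact: mu0.
apply: sumr_ge0 => s0 _; apply: mulr_ge0 => //; apply: sumX_ge0 => x.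
apply: mulr_ge0; first exact: q_ge0.
by apply: sumr_ge0 => a _; apply: mulr_ge0 => //; apply: T_ge0.
Qed.

Lemma xlaw_ge0 pi t x : is_policy pi -> 0 <= xlaw mu T q pi t x.
Proof.
move=> hp; apply: sumr_ge0 => s _; apply: mulr_ge0; last exact: q_ge0.
exact: slaw_aux_ge0.
Qed.

Lemma rho_scale h (I : finType) (psi : I -> X -> A -> R) x1' x2' (k : R) :
  (forall i, is_policy (psi i)) -> 0 <= k ->
  (forall x a, Tobs T q g x a x1' = k * Tobs T q g x a x2') ->
  rho mu T q g h psi x1' = k * rho mu T q g h psi x2'.
Proof.
move=> hp k0 hk; rewrite /rho mulrCA; congr (_ * _).
rewrite mulr_sumr; apply: eq_bigr => i _.
rewrite -sumXZ //; last first.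
  move=> x; apply: mulr_ge0; first exact: xlaw_ge0.
  apply: sumr_ge0 => a _; apply: mulr_ge0; last exact: Tobs_ge0.
  by rewrite invr_ge0.
congr sumX; apply: funext => x.
rewrite mulrCA; congr (_ * _); rewrite mulr_sumr; apply: eq_bigr => a _.
by rewrite hk mulrCA.
Qed.

Lemma D_term (u : X -> A -> R) x' y b : full_support_dist u ->
  Tobs T q g y b x' * u y b <=
  sumX (fun y => \sum_(b : A) Tobs T q g y b x' * u y b).
Proof.
move=> [u0 us].
apply: (le_trans (@sum_term R A _ b (fun c => mulr_ge0 (Tobs_ge0 y c x') (ltW (u0 y c))))).
apply: (@sumX_term R X _ (fun y => \sum_(b : A) u y b)).
- by move=> z; apply: sumr_ge0 => c _; apply: mulr_ge0; [exact: Tobs_ge0|exact: ltW].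
- move=> z; apply: ler_sum => c _; rewrite -{2}(mul1r (u z c)).
  by apply: ler_wpM2r; [exact: ltW | exact: Tobs_le1].
- exact: fin_of_sumX1.
Qed.

Lemma D0_zero (u : X -> A -> R) x' : full_support_dist u ->
  sumX (fun y => \sum_(b : A) Tobs T q g y b x' * u y b) = 0 ->
  forall y b, Tobs T q g y b x' = 0.
Proof.
move=> hu hD y b; have := @D_term u x' y b hu; rewrite hD => hle.
have hge : 0 <= Tobs T q g y b x' * u y b by apply: mulr_ge0; [exact: Tobs_ge0|exact: ltW (hu.1 y b)].
have /eqP : Tobs T q g y b x' * u y b = 0 by apply/le_anti; rewrite hle hge.
by rewrite mulf_eq0 (gt_eqF (hu.1 y b)) orbF => /eqP.
Qed.

End Main.
Arguments Tobs_ge0 {R S X A H levS levX mu T q g} hM x a x'.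
Arguments D0_zero {R S X A H levS levX mu T q g} hM {u x'} _ _ y b.
Arguments rho_scale {R S X A H levS levX mu T q g} hM {h I psi x1' x2' k} _ _ _.

Theorem mainTheorem11 (R : realType) (S : finType) (X : countType) (A : finType)
  (H : nat) (levS : S -> nat) (levX : X -> nat)
  (mu : S -> R) (T : S -> A -> S -> R) (q : S -> X -> R) (g : X -> S)
  (hM : is_block_mdp H levS levX mu T q g)
  (h : nat) (hh : (2 <= h <= H)%N)
  (alpha : R) (I : finType) (psi : I -> X -> A -> R)
  (hcover : policy_cover mu T q h.-1 levS alpha psi) :
  (forall x1 x2 : X, levX x1 = h.-1 -> levX x2 = h.-1 ->
     kin_insep T q g x1 x2 ->
     forall (a : A) (x' : X), levX x' = h ->
       fstar mu T q g h psi x1 a x' = fstar mu T q g h psi x2 a x') /\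
  (forall x1' x2' : X, levX x1' = h -> levX x2' = h ->
     kin_insep T q g x1' x2' ->
     forall (x : X) (a : A), levX x = h.-1 ->
       fstar mu T q g h psi x a x1' = fstar mu T q g h psi x a x2').
Proof.
split.
  move=> x1 x2 _ _ [_ fKI] a x' _.
  by rewrite /fstar fKI.
have hp : forall i, is_policy (psi i) by case: hcover.
move=> x1' x2' _ _ [bKI _] x a _.
have [u hu] := @full_support_exists R X A x a.
set D1 := sumX (fun y => \sum_(b : A) Tobs T q g y b x1' * u y b).
set D2 := sumX (fun y => \sum_(b : A) Tobs T q g y b x2' * u y b).
have key : forall y b, Tobs T q g y b x1' / D1 = Tobs T q g y b x2' / D2.
  move=> y b; have := bKI u hu y b; rewrite /Pu -/D1 -/D2.
  rewrite (mulrAC (Tobs T q g y b x1')) (mulrAC (Tobs T q g y b x2')).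
  by move/(mulIf (lt0r_neq0 (hu.1 y b))).
have bothzero : (forall y b, Tobs T q g y b x1' = 0) -> (forall y b, Tobs T q g y b x2' = 0) ->
   fstar mu T q g h psi x a x1' = fstar mu T q g h psi x a x2'.
  by move=> z1 z2; rewrite /fstar z1 z2 !mul0r.
have [D10|D1n0] := eqVneq D1 0.
  have z1 := D0_zero hM hu D10.
  apply: bothzero => // y b.
  have [D20|D2n0] := eqVneq D2 0; first exact: (D0_zero hM hu D20).
  have := key y b; rewrite z1 mul0r => /esym/eqP.
  by rewrite mulf_eq0 invr_eq0 (negbTE D2n0) orbF => /eqP.
have [D20|D2n0] := eqVneq D2 0.
  have z2 := D0_zero hM hu D20.
  apply: bothzero => // y b.
  have := key y b; rewrite z2 mul0r => /eqP.
  by rewrite mulf_eq0 invr_eq0 (negbTE D1n0) orbF => /eqP.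
have D1ge0 : 0 <= D1.
  apply: sumX_ge0 => y; apply: sumr_ge0 => b _; apply: mulr_ge0; [exact: (Tobs_ge0 hM)|exact: (ltW (hu.1 y b))].
have D2ge0 : 0 <= D2.
  apply: sumX_ge0 => y; apply: sumr_ge0 => b _; apply: mulr_ge0; [exact: (Tobs_ge0 hM)|exact: (ltW (hu.1 y b))].
pose k := D1 / D2.
have kpos : 0 < k.
  by rewrite /k divr_gt0 // lt0r ?D1n0 ?D2n0 ?D1ge0 ?D2ge0.
have hk : forall y b, Tobs T q g y b x1' = k * Tobs T q g y b x2'.
  move=> y b; rewrite -(divfK D1n0 (Tobs T q g y b x1')) key /k.
  by rewrite mulrC mulrA mulrAC.
have hr := rho_scale hM hp (ltW kpos) hk.
rewrite /fstar hk hr -mulrDr invfM mulrACA divff ?mul1r //.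
exact: lt0r_neq0.
Qed.
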